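(* Let $n\ge1$, $k=\lfloor n/2\rfloor$, and let $T=(t_{ij})_{i,j=1}^n$ be the $n\times n$ matrix over the polynomial ring $\mathbb C[x_1,\dots,x_n]$ with $t_{ii}=0$, $t_{ij}=x_j$ for $i<j$ and $t_{ij}=-x_j$ for $i>j$. Then $$\det(\lambda\,\mathrm{Id}-T)=\lambda^n+\sigma_2\lambda^{n-2}+\sigma_4\lambda^{n-4}+\dots+\sigma_{2k}\lambda^{n-2k},$$ where $\sigma_r=\sum_{i_1<\dots<i_r}x_{i_1}\cdots x_{i_r}$ is the $r$-th elementary symmetric polynomial.
   Context: $\lambda$ is an indeterminate; the determinant is taken in $\mathbb C[x_1,\dots,x_n][\lambda]$. *)

(* Defs.v *)
From mathcomp Require Import all_boot all_order all_algebra all_field.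
From mathcomp Require Import mpoly.
Set Implicit Arguments. Unset Strict Implicit. Unset Printing Implicit Defensive.
Import GRing.Theory.
Local Open Scope ring_scope.

Definition Tmx (n : nat) : 'M[{mpoly algC[n]}]_n :=
  \matrix_(i < n, j < n)
    (if (i < j)%N then 'X_j else if (j < i)%N then - 'X_j else 0).

(* Main.v *)
Require Import Defs.
From mathcomp Require Import all_boot all_order all_algebra all_field.
From mathcomp Require Import mpoly.
From mathcomp Require Import ring zify.
Set Implicit Arguments. Unset Strict Implicit. Unset Printing Implicit Defensive.
Import GRing.Theory.
Local Open Scope ring_scope.

Lemma schur1 (R : comRingType) n (u : 'M[R]_(1, n)) (v : 'M[R]_(n, 1)) (D : 'M[R]_n) :
  \det (block_mx 1%:M u v D : 'M[R]_(1 + n)) = \det (D - v *m u).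
Proof.
have := det_mulmx (block_mx 1%:M 0 (-v) 1%:M) (block_mx 1%:M u v D).
rewrite mulmx_block det_lblock !det1 !mul1r => <-.
rewrite !mul1mx !mulmx1 !mul0mx !addr0 addNr mulNmx.
by rewrite det_ublock det1 mul1r addrC.
Qed.

Section Gen.
Variable R : comRingType.

Definition Mt n (x : nat -> R) : 'M[{poly R}]_n :=
  \matrix_(i < n, j < n) (if (i : nat) == j then 'X
     else if (j < i)%N then - (x i)%:P else (x i)%:P).

Lemma Mt_rec n (x : nat -> R) :
  \det (Mt n.+1 x) = ('X - (x 0%N)%:P) * \det (Mt n (fun i => x i.+1))
     + (x 0%N)%:P * \prod_(i < n) ('X + (x i.+1)%:P).
Proof.
pose B : 'M[{poly R}]_(1 + n) := \matrix_(i, j) (if (i : nat) == 0%N then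
   ((j : nat) == 0%N)%:R else Mt n.+1 x i j).
pose C : 'M[{poly R}]_(1 + n) := \matrix_(i, j) (if (i : nat) == 0%N then
   1 else Mt n.+1 x i j).
rewrite (@determinant_multilinear _ _ _ B C 0 ('X - (x 0%N)%:P) (x 0%N)%:P).
- congr (_ * _ + _ * _).
  + rewrite -[B](@submxK _ 1 n 1 n).
    have -> : ulsubmx B = 1%:M.
      by apply/matrixP=> i j; rewrite !ord1 !mxE /=.
    have -> : ursubmx B = 0.
      by apply/matrixP=> i j; rewrite !ord1 !mxE /=.
    apply: eq_trans (schur1 _ _ _) _; rewrite mulmx0 subr0; congr (\det _).
    apply/matrixP=> i j; rewrite !mxE /=.
    by rewrite eqSS ltnS.
  + rewrite -[C](@submxK _ 1 n 1 n).
    have -> : ulsubmx C = 1%:M.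
      by apply/matrixP=> i j; rewrite !ord1 !mxE /=.
    apply: eq_trans (schur1 _ _ _) _; rewrite -det_tr det_trig.
      apply: eq_bigr => i _; rewrite !mxE /= big_ord1 !mxE /= eqxx mulr1 opprK add1n.
      by [].
    apply/is_trig_mxP => i j lt_ij; rewrite !mxE big_ord1 !mxE /=.
    rewrite eqSS ltnS (gtn_eqF lt_ij) lt_ij mulr1 opprK.
    by rewrite addNr.
- apply/rowP=> j; rewrite !mxE /=.
  by rewrite eq_sym; case: (_ == _); rewrite ?mulr1 ?mulr0 ?add0r ?subrK.
- by apply/matrixP=> i j; rewrite !mxE /=.
- by apply/matrixP=> i j; rewrite !mxE /=.
Qed.

Lemma Mt_closed n (x : nat -> R) : 2%:R * \det (Mt n x) =
  \prod_(i < n) ('X + (x i)%:P) + \prod_(i < n) ('X - (x i)%:P).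
Proof.
elim: n x => [|n IH] x.
  by rewrite det_mx00 !big_ord0 mulr1 mulr2n.
rewrite Mt_rec mulrDr mulrCA IH !big_ord_recl.
have L (f : nat -> {poly R}) : \prod_(i < n) f (lift ord0 i) = \prod_(i < n) f i.+1.
  by apply: eq_bigr => i _; rewrite lift0.
rewrite (L (fun k => 'X + (x k)%:P)) (L (fun k => 'X - (x k)%:P)).
ring.
Qed.
End Gen.

Section Fin.
Variable n : nat.
Local Notation S := {mpoly algC[n]}.
Definition phi (s : S) := mmap (intr : int -> S) (fun i : 'I_n => s * 'X_i).

Lemma phi_mesym s k : phi s (mesym n int k) = s ^+ k * mesym n algC k.
Proof.
rewrite /phi /mesym rmorph_sum mulr_sumr; apply: eq_bigr => h /eqP hk.
rewrite rmorph_prod /=.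
under eq_bigr do rewrite mmapX mmap1U.
by rewrite big_split /= prodr_const hk.
Qed.

Lemma VieteS s : \prod_(i < n) ('X - (s * 'X_i)%:P) =
  \sum_(k < n.+1) ((- s) ^+ k * mesym n algC k)%:P * 'X^(n - k) :> {poly S}.
Proof.
have := congr1 (map_poly (phi s)) (Viete n).
rewrite rmorph_prod rmorph_sum /= => E.
apply: eq_trans (eq_trans _ E) _.
  apply: eq_bigr => i _.
  by rewrite rmorphB /= map_polyX map_polyC /= mmapX mmap1U.
apply: eq_bigr => k _.
rewrite !map_polyZ map_polyXn rmorphXn rmorphN1 /=.
have -> : mmap intr (fun i : 'I_n => s * 'X_i) (mesym n int k) = s ^+ k * mesym n algC k.
  exact: phi_mesym.
by rewrite scalerA -mul_polyC mulrA -exprMn mulN1r.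
Qed.
End Fin.

Lemma even_sum (V : comRingType) (F : nat -> V) m :
  \sum_(k < 2 * m) (1 + (-1) ^+ k) * F k = 2%:R * \sum_(i < m) F (2 * i)%N.
Proof.
elim: m => [|m IH]; first by rewrite muln0 !big_ord0 mulr0.
rewrite mulnS !big_ord_recr /= IH mulrDr.
rewrite !exprS exprM sqrrN expr1n expr1n.
ring.
Qed.

Lemma half_cases n : (n.+1 = 2 * (n %/ 2).+1 \/ n.+2 = 2 * (n %/ 2).+1)%N.
Proof. lia. Qed.

Theorem lemma5p5 (n : nat) : (1 <= n)%N ->
  char_poly (Tmx n) =
  \sum_(i < (n %/ 2).+1) (mesym n algC (2 * i))%:P * 'X^(n - 2 * i).
Proof.
move=> n1.
pose x (k : nat) : {mpoly algC[n]} := if insub k is Some i then 'X_i else 0.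
have hx (i : 'I_n) : x i = 'X_i by rewrite /x valK.
have hT : char_poly (Tmx n) = \det (Mt n x).
  rewrite /char_poly -det_tr; congr (\det _); apply/matrixP => i j.
  rewrite !mxE hx.
  have [h|h|h] := ltngtP i j.
  - have -> : (j == i) = false by apply/eqP => e; rewrite e ltnn in h.
    by rewrite /= mulr0n sub0r polyCN opprK.
  - have -> : (j == i) = false by apply/eqP => e; rewrite e ltnn in h.
    by rewrite /= mulr0n sub0r.
  - have e : i = j := val_inj h. subst j.
    by rewrite !eqxx subr0 mulr1n.
have h2 : (2%:R : {poly {mpoly algC[n]}}) != 0.
  by rewrite -polyC_natr polyC_eq0 -mpolyC_nat mpolyC_eq0 Num.Theory.pnatr_eq0.
apply: (mulfI h2).
have E := Mt_closed n x.
rewrite hT E.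
have P1 : \prod_(i < n) ('X + (x i)%:P) = \prod_(i < n) ('X - (-1 * 'X_i)%:P).
  by apply: eq_bigr => i _; rewrite hx mulN1r polyCN opprK.
have P2 : \prod_(i < n) ('X - (x i)%:P) = \prod_(i < n) ('X - (1 * 'X_i)%:P).
  by apply: eq_bigr => i _; rewrite hx mul1r.
rewrite [X in X + _ = _]P1 [X in _ + X = _]P2.
rewrite [X in X + _ = _](VieteS (-1)) [X in _ + X = _](VieteS 1) -[LHS]big_split.
pose F (k : nat) : {poly {mpoly algC[n]}} := (mesym n algC k)%:P * 'X^(n - k).
transitivity (\sum_(k < n.+1) (1 + (-1) ^+ k) * F k).
  apply: eq_bigr => k _; rewrite /F opprK expr1n mul1r polyCM rmorphXn rmorphN1.
  by rewrite mulrDl mul1r mulrA.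
have [h|h] := half_cases n.
  rewrite [in LHS]h; exact: (even_sum F (n %/ 2).+1).
transitivity (\sum_(k < n.+2) (1 + (-1) ^+ k) * F k).
  rewrite [RHS]big_ord_recr.
  apply: esym; rewrite -[RHS]addr0; congr (_ + _).
  rewrite /F.
  suff -> : mesym n algC (@ord_max n.+1) = 0 by rewrite polyC0 mul0r mulr0.
  exact: mesym_geqnE.
rewrite [in LHS]h; exact: (even_sum F (n %/ 2).+1).
Qed.
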